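(* Let $z\ge0$ be an integer. If an undirected multigraph $G$ has a $z$-antler $(C_1,F_1)$ and $G-(C_1\cup F_1)$ has a $z$-antler $(C_2,F_2)$, then $(C_1\cup C_2,\,F_1\cup F_2)$ is a $z$-antler in $G$.
   Context: A feedback vertex set (FVS) of $G$ is a set $X\subseteq V(G)$ with $G-X$ acyclic (self-loops and pairs of parallel edges count as cycles); $\mathrm{fvs}(G)$ is its minimum size. For disjoint $X,Y$, $e(X,Y)$ is the number of edges between $X$ and $Y$. A feedback vertex cut (FVC) in $G$ is a pair of disjoint sets $C,F\subseteq V(G)$ such that $G[F]$ is a forest and every tree $T$ of $G[F]$ satisfies $e(V(T),V(G)\setminus(C\cup F))\le1$. An antler is a FVC $(C,F)$ with $|C|\le\mathrm{fvs}(G[C\cup F])$. For $C\subseteq V(G)$, a $C$-certificate is a subgraph $H$ of $G$ such that $C$ is a minimum FVS of $H$; it has order $z$ if every component $H'$ of $H$ satisfies $\mathrm{fvs}(H')=|C\cap V(H')|\le z$. A $z$-antler is an antler $(C,F)$ such that $G[C\cup F]$ contains a $C$-certificate of order $z$. *)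

(* Defs.v *)
From Stdlib Require Import ClassicalEpsilon.
From mathcomp Require Import all_boot.

Set Implicit Arguments.
Unset Strict Implicit.
Unset Printing Implicit Defensive.

(* A (multi)graph lives inside vertex universe T and edge universe E; every edge
   e has two (unordered) ends [ends e]; e is a self-loop iff both ends coincide. Subgraphs share the same incidence function [ends]. *)
Record mgraph (T E : finType) := MG { gV : {set T}; gE : {set E} }.

Section MultiGraphs.
Variables (T E : finType) (ends : E -> T * T).

Definition wf (G : mgraph T E) : Prop :=
  forall e, e \in gE G -> (ends e).1 \in gV G /\ (ends e).2 \in gV G.

Definition joins (e : E) (x y : T) : bool :=
  (ends e == (x, y)) || (ends e == (y, x)).

Definition induced (G : mgraph T E) (S : {set T}) : mgraph T E :=
  MG (gV G :&: S) [set e in gE G | ((ends e).1 \in S) && ((ends e).2 \in S)].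

Definition del (G : mgraph T E) (X : {set T}) : mgraph T E := induced G (~: X).

(* A cycle: distinct vertices v_0..v_{k-1}, distinct edges e_0..e_{k-1} (k >= 1),
   e_i joining v_i and v_{i+1 mod k}.  k = 1: a self-loop; k = 2: two parallel edges. *)
Definition has_cycle (G : mgraph T E) : Prop :=
  exists (v0 : T) (vs : seq T) (e0 : E) (es : seq E),
    let vs' := v0 :: vs in let es' := e0 :: es in
    [/\ size vs = size es, uniq vs' && uniq es',
        all (fun v => v \in gV G) vs', all (fun e => e \in gE G) es' &
        forall i, i < size es' ->
          joins (nth e0 es' i) (nth v0 vs' i) (nth v0 vs' (i.+1 %% size es'))].

Definition acyclic (G : mgraph T E) : Prop := ~ has_cycle G.

Definition is_fvs (G : mgraph T E) (X : {set T}) : Prop :=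
  X \subset gV G /\ acyclic (del G X).

Definition is_fvsb (G : mgraph T E) (X : {set T}) : bool :=
  if excluded_middle_informative (is_fvs G X) then true else false.

(* fvs(G): minimum size of a FVS (V(G) itself is always one, so #|T| is a safe
   neutral element). *)
Definition fvs (G : mgraph T E) : nat :=
  \big[minn/#|T|]_(X : {set T} | is_fvsb G X) #|X|.

Definition adj (G : mgraph T E) : rel T :=
  fun x y => [exists e in gE G, joins e x y].

Definition comp (G : mgraph T E) (v : T) : {set T} :=
  [set u in gV G | connect (adj G) v u].

Definition is_component (G : mgraph T E) (K : {set T}) : Prop :=
  exists2 v, v \in gV G & K = comp G v.

Definition e_between (G : mgraph T E) (X Y : {set T}) : nat :=
  #|[set e in gE G | (((ends e).1 \in X) && ((ends e).2 \in Y))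
                     || (((ends e).1 \in Y) && ((ends e).2 \in X))]|.

Definition FVC (G : mgraph T E) (C F : {set T}) : Prop :=
  [/\ C \subset gV G, F \subset gV G, [disjoint C & F],
      acyclic (induced G F) &
      forall K, is_component (induced G F) K ->
        e_between G K (gV G :\: (C :|: F)) <= 1].

Definition antler (G : mgraph T E) (C F : {set T}) : Prop :=
  FVC G C F /\ #|C| <= fvs (induced G (C :|: F)).

Definition subgraph (H G : mgraph T E) : Prop :=
  [/\ gV H \subset gV G, gE H \subset gE G & wf H].

Definition certificate (G : mgraph T E) (C : {set T}) (H : mgraph T E) : Prop :=
  [/\ subgraph H G, is_fvs H C & forall X, is_fvs H X -> #|C| <= #|X|].

Definition cert_order (C : {set T}) (H : mgraph T E) (z : nat) : Prop :=
  forall K, is_component H K ->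
    fvs (induced H K) = #|C :&: K| /\ #|C :&: K| <= z.

Definition z_antler (G : mgraph T E) (z : nat) (C F : {set T}) : Prop :=
  antler G C F /\
  exists H, certificate (induced G (C :|: F)) C H /\ cert_order C H z.

End MultiGraphs.

(* Main.v *)
Require Import Defs.
From Stdlib Require Import ClassicalEpsilon.
From mathcomp Require Import all_boot.
From mathcomp Require Import zify.
Set Implicit Arguments. Unset Strict Implicit. Unset Printing Implicit Defensive.


Lemma cyc_change (p : nat -> bool) k i0 j0 : i0 < k -> j0 < k -> p i0 -> ~~ p j0 ->
  exists2 i, i < k & p i && ~~ p (i.+1 %% k).
Proof.
move=> hi hj pi pj.
case: (boolP [exists i : 'I_k, p i && ~~ p (i.+1 %% k)]).
  by case/existsP => i Hi; exists i.
move/existsPn => H.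
have H' : forall i, i < k -> p i -> p (i.+1 %% k).
  by move=> i ik pi'; move: (H (Ordinal ik)); rewrite /= pi' /= negbK.
have k0 : 0 < k by lia.
have A : forall n, p ((i0 + n) %% k).
  elim=> [|n IH]; first by rewrite addn0 modn_small.
  have := H' _ (ltn_pmod (i0 + n) k0) IH.
  by rewrite -addn1 modnDml addn1 addnS.
move: (A (j0 + k - i0)); rewrite (_ : i0 + (j0 + k - i0) = j0 + k); last by lia.
by rewrite modnDr modn_small // (negbTE pj).
Qed.


Section S.
Variables (T E : finType) (ends : E -> T * T).
Local Notation joins := (joins ends).
Local Notation induced := (induced ends).
Local Notation del := (del ends).
Local Notation has_cycle := (has_cycle ends).

Definition cyc (A : mgraph T E) v0 vs e0 es : Prop :=
    let vs' := v0 :: vs in let es' := e0 :: es in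
    [/\ size vs = size es, uniq vs' && uniq es',
        all (fun v => v \in gV A) vs', all (fun e => e \in gE A) es' &
        forall i, i < size es' ->
          joins (nth e0 es' i) (nth v0 vs' i) (nth v0 vs' (i.+1 %% size es'))].

Lemma has_cycleE A : has_cycle A <-> exists v0 vs e0 es, cyc A v0 vs e0 es.
Proof. by []. Qed.

Lemma joinsC e x y : joins e x y = joins e y x.
Proof. by rewrite /Defs.joins orbC. Qed.

Lemma joins_ends e x y : joins e x y -> (ends e).1 \in [:: x; y] /\ (ends e).2 \in [:: x; y].
Proof. by rewrite /Defs.joins => /orP [] /eqP ->; rewrite !inE !eqxx ?orbT. Qed.

Lemma cyc_cross A v0 vs e0 es (S : {set T}) : cyc A v0 vs e0 es ->
  (exists2 v, v \in v0 :: vs & v \in S) -> (exists2 v, v \in v0 :: vs & v \notin S) ->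
  exists e1 e2 x1 y1 x2 y2, [/\ e1 != e2, e1 \in gE A, e2 \in gE A, joins e1 x1 y1 & joins e2 x2 y2] /\
     [/\ x1 \in S, x2 \in S, y1 \notin S & y2 \notin S] /\ (y1 \in gV A /\ y2 \in gV A).
Proof.
move=> [hs /andP[uv ue] av ae hj] [a ain aS] [b bin bS].
set vs' := v0 :: vs in ain bin av uv hj *; set es' := e0 :: es in ue ae hj *.
have sz : size es' = size vs' by rewrite /= hs.
set p := fun i => nth v0 vs' i \in S.
have ia : index a vs' < size es' by rewrite sz index_mem.
have ib : index b vs' < size es' by rewrite sz index_mem.
have pa : p (index a vs') by rewrite /p nth_index.
have pb : ~~ p (index b vs') by rewrite /p nth_index.
have [i ik /andP[pi pi1]] := @cyc_change p _ _ _ ia ib pa pb.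
have [j jk /andP[pj pj1]] := @cyc_change (fun i => ~~ p i) _ _ _ ib ia pb (negbT (negbF pa)).
rewrite negbK in pj1.
have mv : forall l, l < size es' -> nth v0 vs' l \in gV A.
  by move=> l hl; apply: (allP av); apply: mem_nth; rewrite -sz.
have me : forall l, l < size es' -> nth e0 es' l \in gE A.
  by move=> l hl; apply: (allP ae); apply: mem_nth.
have k0 : 0 < size es' by [].
exists (nth e0 es' i), (nth e0 es' j), (nth v0 vs' i), (nth v0 vs' (i.+1 %% size es')),
   (nth v0 vs' (j.+1 %% size es')), (nth v0 vs' j); split; last first.
  by split; [split|split; apply: mv => //; apply: ltn_pmod].
split; [|by apply: me|by apply: me|by apply: hj| by rewrite joinsC; apply: hj].
rewrite nth_uniq //; apply/eqP => ij; subst j.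
by move: pj; rewrite pi.
Qed.

Lemma cyc_sub A B v0 vs e0 es : cyc A v0 vs e0 es ->
  {in v0 :: vs, forall v, v \in gV B} -> {in e0 :: es, forall e, e \in gE B} -> has_cycle B.
Proof.
move=> [hs hu av ae hj] hv he; exists v0, vs, e0, es; split=> //.
  by apply/allP => v /hv.
by apply/allP => e /he.
Qed.

Lemma cyc_edge A v0 vs e0 es e : cyc A v0 vs e0 es -> e \in e0 :: es ->
  exists x y, [/\ x \in v0 :: vs, y \in v0 :: vs & joins e x y].
Proof.
move=> [hs hu av ae hj] ein.
set es' := e0 :: es in ein hj *; set vs' := v0 :: vs in hj *.
have sz : size es' = size vs' by rewrite /= hs.
have il : index e es' < size es' by rewrite index_mem.
exists (nth v0 vs' (index e es')), (nth v0 vs' ((index e es').+1 %% size es')); split.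
- by apply: mem_nth; rewrite -sz.
- by apply: mem_nth; rewrite -sz; apply: ltn_pmod.
- by have := hj _ il; rewrite nth_index.
Qed.

Lemma cyc_edge_ends A v0 vs e0 es e : cyc A v0 vs e0 es -> e \in e0 :: es ->
  (ends e).1 \in v0 :: vs /\ (ends e).2 \in v0 :: vs.
Proof.
move=> c ein; have [x [y [xi yi /joins_ends [h1 h2]]]] := cyc_edge c ein.
by move: h1 h2; rewrite !inE => /orP [] /eqP -> /orP [] /eqP ->.
Qed.

Lemma cyc_closed A (S : {set T}) :
  (forall e x y, e \in gE A -> joins e x y -> x \in S -> y \in S) ->
  has_cycle A -> has_cycle (induced A S) \/ has_cycle (induced A (~: S)).
Proof.
move=> cl /has_cycleE [v0 [vs [e0 [es c]]]].
have c' := c; case: c' => [hs hu av ae hj].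
have allin : forall S' : {set T}, (forall v, v \in v0 :: vs -> v \in S') -> has_cycle (induced A S').
  move=> S' hS; apply: (cyc_sub c).
    by move=> v vi; rewrite inE (allP av) //= hS.
  move=> e ei; have [h1 h2] := cyc_edge_ends c ei.
  by rewrite inE (allP ae) //= !hS.
case: (boolP [forall v in v0 :: vs, v \in S]) => [/forall_inP h|].
  by left; apply: allin => v vi; apply: h.
case/forall_inPn => b bin bS.
case: (boolP [forall v in v0 :: vs, v \notin S]) => [/forall_inP h|].
  by right; apply: allin => v vi; rewrite inE; apply: h.
case/forall_inPn => a ain; rewrite negbK => aS.
have [e1 [_ [x1 [y1 [_ [_ [[_ h1 _ j1 _] [[xS _ yS _] _]]]]]]]] := cyc_cross c (ex_intro2 _ _ a ain aS) (ex_intro2 _ _ b bin bS).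
by move: yS; rewrite (cl _ _ _ h1 j1 xS).
Qed.

End S.


Section S.
Variables (T E : finType) (ends : E -> T * T).
Local Notation joins := (joins ends).
Local Notation induced := (induced ends).
Local Notation del := (del ends).
Local Notation has_cycle := (has_cycle ends).
Local Notation adj := (adj ends).
Local Notation comp := (Defs.comp ends).
Local Notation e_between := (e_between ends).
Local Notation wf := (wf ends).

Lemma joins_in e x y (S : {set T}) : joins e x y ->
  ((ends e).1 \in S) && ((ends e).2 \in S) = (x \in S) && (y \in S).
Proof. by rewrite /Defs.joins => /orP [] /eqP ->; rewrite // andbC. Qed.

Lemma joins_l e x y (S : {set T}) : joins e x y ->
  ((ends e).1 \in S) && ((ends e).2 \in S) -> x \in S.
Proof. by move/joins_in => -> /andP[]. Qed.

Lemma joins_r e x y (S : {set T}) : joins e x y ->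
  ((ends e).1 \in S) && ((ends e).2 \in S) -> y \in S.
Proof. by move/joins_in => -> /andP[]. Qed.

Lemma joins_two e x y x' y' : joins e x y -> joins e x' y' -> y' = x \/ y' = y.
Proof.
rewrite /Defs.joins => /orP [] /eqP -> /orP [] /eqP [] -> ->; auto.
Qed.

Lemma wf_joins G e x y : wf G -> e \in gE G -> joins e x y -> x \in gV G /\ y \in gV G.
Proof.
move=> w ein j; have [h1 h2] := w e ein.
have h : ((ends e).1 \in gV G) && ((ends e).2 \in gV G) by rewrite h1 h2.
by rewrite (joins_l j h) (joins_r j h).
Qed.

Lemma wf_induced G S : wf G -> wf (induced G S).
Proof.
move=> w e; rewrite !inE => /andP[ein /andP[h1 h2]]; have [g1 g2] := w e ein.
by rewrite g1 g2 h1 h2.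
Qed.

Lemma adjC G : symmetric (adj G).
Proof.
move=> x y; apply/existsP/existsP => [] [e /andP[h1 h2]]; exists e;
  by rewrite h1 /= joinsC.
Qed.

Lemma adjP G x y : reflect (exists2 e, e \in gE G & joins e x y) (adj G x y).
Proof.
apply: (iffP existsP) => [[e /andP[h1 h2]]|[e h1 h2]]; first by exists e.
by exists e; rewrite h1 h2.
Qed.

Lemma compP G v u : (u \in comp G v) = (u \in gV G) && connect (adj G) v u.
Proof. by rewrite inE. Qed.

Lemma connect_inv (r : rel T) (P : T -> Prop) x : P x ->
  (forall a b, connect r x a -> P a -> r a b -> P b) -> forall y, connect r x y -> P y.
Proof.
move=> Px st y /connectP [p pth ->].
suff H : forall a, connect r x a -> P a -> path r a p -> P (last a p).
  by apply: H pth => //; apply: connect0.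
clear pth.
elim: p => [|b p IH] a ca Pa //= /andP[rab pth]; apply: IH pth.
  by apply: connect_trans ca (connect1 rab).
by apply: st ca Pa rab.
Qed.

Lemma eb_mem (G : mgraph T E) (X Y : {set T}) e : (e \in [set e in gE G | (((ends e).1 \in X) && ((ends e).2 \in Y))
                     || (((ends e).1 \in Y) && ((ends e).2 \in X))]) <->
   e \in gE G /\ exists x y, [/\ joins e x y, x \in X & y \in Y].
Proof.
rewrite inE; split.
  case/andP => ein /orP [] /andP[h1 h2]; split=> //.
    by exists (ends e).1, (ends e).2; rewrite /Defs.joins -surjective_pairing eqxx.
  by exists (ends e).2, (ends e).1; rewrite /Defs.joins -surjective_pairing eqxx orbT.
case=> ein [x [y [j hx hy]]]; rewrite ein /=.
by move: j; rewrite /Defs.joins => /orP [] /eqP -> /=; rewrite hx hy ?orbT.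
Qed.

Lemma eb_le (G G' : mgraph T E) (X Y X' Y' : {set T}) :
  (forall e x y, e \in gE G -> joins e x y -> x \in X -> y \in Y ->
     e \in gE G' /\ exists x' y', [/\ joins e x' y', x' \in X' & y' \in Y']) ->
  e_between G X Y <= e_between G' X' Y'.
Proof.
move=> h; apply: subset_leq_card; apply/subsetP => e /eb_mem [ein [x [y [j hx hy]]]].
by apply/eb_mem; apply: h j hx hy.
Qed.

Lemma eb_two (G : mgraph T E) (X Y : {set T}) e1 e2 x1 y1 x2 y2 : e1 != e2 -> e1 \in gE G -> e2 \in gE G ->
  joins e1 x1 y1 -> joins e2 x2 y2 -> x1 \in X -> x2 \in X -> y1 \in Y -> y2 \in Y ->
  1 < e_between G X Y.
Proof.
move=> ne h1 h2 j1 j2 a1 a2 b1 b2.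
have -> : 1 < e_between G X Y = (#|[set e1; e2]| <= e_between G X Y) by rewrite cards2 ne.
rewrite /Defs.e_between; apply: subset_leq_card.
apply/subsetP => e /set2P [] ->; apply/eb_mem; split=> //.
  by exists x1, y1.
by exists x2, y2.
Qed.

End S.


Section S.
Variables (T E : finType) (ends : E -> T * T).
Local Notation joins := (joins ends).
Local Notation induced := (induced ends).
Local Notation del := (del ends).
Local Notation has_cycle := (has_cycle ends).
Local Notation adj := (adj ends).
Local Notation comp := (Defs.comp ends).
Local Notation e_between := (e_between ends).
Local Notation wf := (wf ends).

Variables (G : mgraph T E) (C1 F1 C2 F2 : {set T}).
Hypothesis hwf : wf G.
Hypothesis hF1 : F1 \subset gV G.
Hypothesis hcomp1 : forall K, is_component ends (induced G F1) K ->
        e_between G K (gV G :\: (C1 :|: F1)) <= 1.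
Hypothesis acyc1 : acyclic ends (induced G F1).
Hypothesis hF2 : F2 \subset gV (del G (C1 :|: F1)).
Hypothesis hcomp2 : forall K, is_component ends (induced (del G (C1 :|: F1)) F2) K ->
        e_between (del G (C1 :|: F1)) K (gV (del G (C1 :|: F1)) :\: (C2 :|: F2)) <= 1.
Hypothesis acyc2 : acyclic ends (induced (del G (C1 :|: F1)) F2).

Let G2 := del G (C1 :|: F1).

Lemma F2P x : x \in F2 -> [/\ x \in gV G, x \notin C1, x \notin F1 & x \in gV G2].
Proof.
move=> xF; have := subsetP hF2 x xF; rewrite /G2 !inE negb_or.
by case/andP => -> /andP[-> ->].
Qed.

Lemma F1F2 x : x \in F1 -> x \notin F2.
Proof. by move=> h; apply/negP => /F2P [_ _ /negP]. Qed.

Lemma G2E e : e \in gE G2 = (e \in gE G) && ((ends e).1 \notin C1 :|: F1) && ((ends e).2 \notin C1 :|: F1).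
Proof. by rewrite /G2 /Defs.del /Defs.induced !inE andbA. Qed.

Lemma leave u e x y : u \in F1 -> e \in gE G -> joins e x y ->
  x \in comp (induced G F1) u -> y \in F1 -> y \in comp (induced G F1) u.
Proof.
move=> uF ein j; rewrite !compP => /andP[xV cx] yF.
have [_ yV] := wf_joins hwf ein j.
have xF : x \in F1 by move: xV; rewrite inE => /andP[].
apply/andP; split; first by rewrite inE yV yF.
apply: connect_trans cx (connect1 _); apply/adjP; exists e => //.
by rewrite inE ein (joins_in F1 j) xF yF.
Qed.

Lemma comp1_comp u : u \in F1 -> is_component ends (induced G F1) (comp (induced G F1) u).
Proof. by move=> uF; exists u => //; rewrite inE (subsetP hF1 u uF). Qed.

Lemma comp1_sub u x : x \in comp (induced G F1) u -> x \in F1 /\ x \in gV G.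
Proof. by rewrite compP inE => /andP[/andP[-> ->]]. Qed.

Lemma two_out u e1 e2 x1 y1 x2 y2 : u \in F1 -> e1 != e2 -> e1 \in gE G -> e2 \in gE G ->
  joins e1 x1 y1 -> joins e2 x2 y2 -> x1 \in comp (induced G F1) u -> x2 \in comp (induced G F1) u ->
  y1 \notin C1 :|: F1 -> y2 \notin C1 :|: F1 -> False.
Proof.
move=> uF ne h1 h2 j1 j2 a1 a2 b1 b2.
have [_ v1] := wf_joins hwf h1 j1; have [_ v2] := wf_joins hwf h2 j2.
have := hcomp1 (comp1_comp uF).
by rewrite leqNgt (eb_two ne h1 h2 j1 j2 a1 a2) // inE ?b1 ?b2 ?v1 ?v2.
Qed.

Lemma acycA : acyclic ends (induced G (F1 :|: F2)).
Proof using hwf hF1 hcomp1 acyc1 hF2 hcomp2 acyc2.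
move=> /has_cycleE [v0 [vs [e0 [es c]]]].
have c' := c; case: c' => [hs hu av ae hj].
have vin : forall v, v \in v0 :: vs -> (v \in gV G) && (v \in F1 :|: F2).
  by move=> v vi; have := allP av v vi; rewrite inE.
have ein : forall e, e \in e0 :: es -> e \in gE G.
  by move=> e ei; have := allP ae e ei; rewrite inE => /andP[].
case: (boolP [forall v in v0 :: vs, v \in F1]) => [/forall_inP h|].
  apply: acyc1; apply: (cyc_sub c).
    by move=> v vi; rewrite inE h // andbT; case/andP: (vin v vi).
  move=> e ei; have [h1 h2] := cyc_edge_ends c ei.
  by rewrite inE ein //= !h.
case/forall_inPn => b bin bF1.
case: (boolP [forall v in v0 :: vs, v \in F2]) => [/forall_inP h|].
  apply: acyc2; apply: (cyc_sub c).
    by move=> v vi; have [_ _ _ hv] := F2P (h v vi); rewrite inE hv h.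
  move=> e ei; have [h1 h2] := cyc_edge_ends c ei.
  have [_ a1 a2 _] := F2P (h _ h1); have [_ b1 b2 _] := F2P (h _ h2).
  by rewrite inE G2E ein //= !inE !negb_or a1 a2 b1 b2 !h.
case/forall_inPn => a ain aF2.
have aF1 : a \in F1 by case/andP: (vin a ain); rewrite inE (negbTE aF2) orbF.
have bF2 : b \in F2 by case/andP: (vin b bin); rewrite inE (negbTE bF1).
set K1 := comp (induced G F1) a.
have aK : a \in K1 by rewrite compP connect0 inE (subsetP hF1 a aF1) aF1.
have bK : b \notin K1 by apply/negP => /comp1_sub [/F1F2]; rewrite bF2.
have [e1 [e2 [x1 [y1 [x2 [y2 [[ne h1 h2 j1 j2] [[xK1 xK2 yK1 yK2] [yV1 yV2]]]]]]]]] :=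
   cyc_cross c (ex_intro2 _ _ a ain aK) (ex_intro2 _ _ b bin bK).
have h1' : e1 \in gE G by move: h1; rewrite inE => /andP[].
have h2' : e2 \in gE G by move: h2; rewrite inE => /andP[].
have out : forall e x y, e \in gE G -> joins e x y -> x \in K1 -> y \notin K1 ->
    y \in gV (induced G (F1 :|: F2)) -> y \notin C1 :|: F1.
  move=> e x y hE j xK yK; rewrite inE => /andP[yV]; rewrite inE => /orP [yF|yF].
    by move: yK; rewrite (leave aF1 hE j xK yF).
  by have [_ p q _] := F2P yF; rewrite inE negb_or p q.
exact: (two_out aF1 ne h1' h2' j1 j2 xK1 xK2 (out _ _ _ h1' j1 xK1 yK1 yV1) (out _ _ _ h2' j2 xK2 yK2 yV2)).
Qed.


Lemma G'E e : e \in gE (induced G (F1 :|: F2)) =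
  (e \in gE G) && ((ends e).1 \in F1 :|: F2) && ((ends e).2 \in F1 :|: F2).
Proof. by rewrite !inE andbA. Qed.

Lemma adj'P a b : adj (induced G (F1 :|: F2)) a b ->
  exists e, [/\ e \in gE G, joins e a b, a \in F1 :|: F2, b \in F1 :|: F2 & a \in gV G /\ b \in gV G].
Proof.
case/adjP => e; rewrite G'E -andbA => /andP[ein h] j; exists e.
have [av bv] := wf_joins hwf ein j.
by rewrite ein j (joins_l j h) (joins_r j h) av bv.
Qed.

Definition inv w u :=
  (u \in F2 /\ connect (adj (induced G2 F2)) w u) \/
  (u \in F1 /\ exists x y e, [/\ x \in comp (induced G F1) u, y \in F2,
     connect (adj (induced G2 F2)) w y, e \in gE G & joins e x y]).

Lemma inv_step w : w \in F2 -> forall u,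
  connect (adj (induced G (F1 :|: F2))) w u -> inv w u.
Proof.
move=> wF; apply: connect_inv; first by left; split=> //; apply: connect0.
move=> a b _ Ia /adj'P [e [ein j aF bF [aV bV]]].
have bC : b \in F1 -> b \in comp (induced G F1) b by move=> bF1; rewrite compP connect0 inE bV bF1.
move: aF bF; rewrite !inE => /orP [aF|aF] /orP [bF|bF].
-
  case: Ia => [[aF2 _]|[_ [x [y [e' [xK yF cy e'in j']]]]]]; first by move: (F1F2 aF); rewrite aF2.
  right; split=> //; exists x, y, e'; split=> //.
  have bK : b \in comp (induced G F1) a by apply: (leave aF ein j _ bF); rewrite compP connect0 inE aV aF.
  move: xK bK; rewrite !compP => /andP[-> cax] /andP[_ cab] /=.
  apply: connect_trans _ cax; rewrite (sym_connect_sym (adjC ends _)); exact: cab.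
-
  case: Ia => [[aF2 _]|[_ [x [y [e' [xK yF cy e'in j']]]]]]; first by move: (F1F2 aF); rewrite aF2.
  left; split=> //.
  have [_ c1 f1 _] := F2P yF; have [_ c2 f2 _] := F2P bF.
  have aK : a \in comp (induced G F1) a by rewrite compP connect0 inE aV aF.
  case: (eqVneq e e') => [ee'|ne].
    subst e'; case: (joins_two j' j) => eb; last by rewrite eb.
    have [xF1 _] := comp1_sub xK; by move: (F1F2 xF1); rewrite -eb bF.
  exfalso; apply: (two_out aF ne ein e'in j j' aK xK); by rewrite !inE negb_or ?c1 ?f1 ?c2 ?f2.
-
  case: Ia => [[_ cwa]|[aF1 _]]; last by move: (F1F2 aF1); rewrite aF.
  right; split=> //; exists b, a, e; split=> //; first exact: bC.
  by rewrite joinsC.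
-
  case: Ia => [[_ cwa]|[aF1 _]]; last by move: (F1F2 aF1); rewrite aF.
  left; split=> //; apply: connect_trans cwa (connect1 _); apply/adjP; exists e => //.
  have [_ c1 f1 _] := F2P aF; have [_ c2 f2 _] := F2P bF.
  rewrite inE G2E ein (joins_in F2 j) aF bF andbT /=.
  have h : ((ends e).1 \in ~: (C1 :|: F1)) && ((ends e).2 \in ~: (C1 :|: F1)).
    by rewrite (joins_in _ j) !inE !negb_or c1 f1 c2 f2.
  move: h.
  by rewrite !in_setC andbT.
Qed.


Lemma compB K : is_component ends (induced G (F1 :|: F2)) K ->
  e_between G K (gV G :\: ((C1 :|: C2) :|: (F1 :|: F2))) <= 1.
Proof using hwf hF1 hcomp1 acyc1 hF2 hcomp2 acyc2.
case=> v vV ->; set G' := induced G (F1 :|: F2).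
have symc : connect_sym (adj G') by apply: sym_connect_sym; apply: adjC.
case: (boolP [exists w, (w \in comp G' v) && (w \in F2)]).
- case/existsP => w /andP[wK wF].
  have [_ _ _ wV2] := F2P wF.
  have K2c : is_component ends (induced G2 F2) (comp (induced G2 F2) w).
    by exists w; rewrite // inE wV2 wF.
  apply: leq_trans (hcomp2 K2c); apply: eb_le => e x y ein j xK yR.
  move: yR; rewrite !inE !negb_or => /andP[/andP[/andP[yC1 yC2] /andP[yF1 yF2]] yV].
  have cwx : connect (adj G') w x.
    move: wK xK; rewrite !compP => /andP[_ cvw] /andP[_ cvx].
    by apply: connect_trans cvx; rewrite symc.
  case: (inv_step wF cwx) => [[xF cx]|[xF1 [x' [y' [e'' [x'K y'F cy' e''in j'']]]]]].
  + have [xV xC1 xF1 xV2] := F2P xF.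
    split.
      rewrite ein /=.
      have h : ((ends e).1 \in ~: (C1 :|: F1)) && ((ends e).2 \in ~: (C1 :|: F1)).
        by rewrite (joins_in _ j) !inE !negb_or xC1 xF1 yC1 yF1.
      by move: h; rewrite !inE !negb_or => /andP[/andP[-> ->] /andP[-> ->]].
    exists x, y; split=> //.
      by rewrite compP inE xV2 xF cx.
    by rewrite !inE !negb_or yC2 yF2 yV yC1 yF1.
  + exfalso.
    have ne : e != e''.
      apply/eqP => ee; subst e''; case: (joins_two j j'') => ey.
        by move: (F1F2 xF1); rewrite -ey y'F.
      by move: yF2; rewrite -ey y'F.
    have xK1 : x \in comp (induced G F1) x.
      by have [xV _] := wf_joins hwf ein j; rewrite compP connect0 inE xV xF1.
    have [_ c1 f1 _] := F2P y'F.
    by apply: (two_out xF1 ne ein e''in j j'' xK1 x'K); rewrite !inE !negb_or ?c1 ?f1 ?yC1 ?yF1.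
- move/existsPn => H.
  have vK : v \in comp G' v by rewrite compP vV connect0.
  have vF1 : v \in F1.
    by have := H v; rewrite vK /= => vF2; move: vV; rewrite !inE (negbTE vF2) orbF => /andP[].
  have cl : forall u, connect (adj G') v u -> connect (adj (induced G F1)) v u.
    apply: connect_inv; first exact: connect0.
    move=> a b cva cva1 ab; have [e [ein j aF bF [aV bV]]] := adj'P ab.
    have aK : a \in comp G' v by rewrite compP inE aV aF cva.
    have bK : b \in comp G' v by rewrite compP inE bV bF (connect_trans cva (connect1 ab)).
    have aF1 : a \in F1 by move: aF (H a); rewrite aK inE => /orP [] // ->.
    have bF1 : b \in F1 by move: bF (H b); rewrite bK inE => /orP [] // ->.
    apply: connect_trans cva1 (connect1 _); apply/adjP; exists e => //.
    by rewrite inE ein (joins_in _ j) aF1 bF1.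
  apply: leq_trans (hcomp1 (comp1_comp vF1)); apply: eb_le => e x y ein j xK yR.
  split=> //; exists x, y; split=> //.
    move: (H x); rewrite xK /=; move: xK; rewrite compP inE => /andP[/andP[xV xF] cvx] xF2.
    by rewrite compP inE xV (cl _ cvx); move: xF; rewrite inE (negbTE xF2) orbF => ->.
  by move: yR; rewrite !inE !negb_or => /andP[/andP[/andP[-> _] /andP[-> _]] ->].
Qed.

End S.


Section S.
Variables (T E : finType) (ends : E -> T * T).
Local Notation joins := (joins ends).
Local Notation induced := (induced ends).
Local Notation del := (del ends).
Local Notation has_cycle := (has_cycle ends).
Local Notation adj := (adj ends).
Local Notation comp := (Defs.comp ends).
Local Notation wf := (wf ends).
Local Notation is_fvs := (is_fvs ends).

Lemma disjP (A B : {set T}) : reflect (forall x, x \in A -> x \in B -> False) [disjoint A & B].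
Proof.
rewrite disjoint_subset; apply: (iffP subsetP) => [h x xA xB|h x xA].
  by have := h x xA; rewrite inE xB.
by rewrite inE; apply/negP => /(h x xA).
Qed.

Lemma cycle_mono (A B : mgraph T E) : gV A \subset gV B -> gE A \subset gE B ->
  has_cycle A -> has_cycle B.
Proof.
move=> /subsetP sv /subsetP se /has_cycleE [v0 [vs [e0 [es c]]]].
have c' := c; case: c' => [_ _ av ae _].
apply: (cyc_sub c) => [v /(allP av)|e /(allP ae)]; [exact: sv|exact: se].
Qed.

Lemma fvs_restrict (H1 H : mgraph T E) X : wf H1 -> gV H1 \subset gV H -> gE H1 \subset gE H ->
  is_fvs H X -> is_fvs H1 (X :&: gV H1).
Proof.
move=> w /subsetP sv /subsetP se [_ ac]; split; first exact: subsetIr.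
move=> cy; apply: ac; apply: (cycle_mono _ _ cy).
  apply/subsetP => v; rewrite !inE => /andP[vX vH]; rewrite sv //=.
  by move: vH; rewrite vX andbT.
apply/subsetP => e; rewrite !inE => /andP[eH /andP[h1 h2]]; have [g1 g2] := w e eH.
by rewrite se //=; move: h1 h2; rewrite g1 g2 !andbT => -> ->.
Qed.

Lemma comp_sub (H1 : mgraph T E) v : comp H1 v \subset gV H1.
Proof. by apply/subsetP => u; rewrite compP => /andP[]. Qed.

Variables (H1 H2 H : mgraph T E).
Hypothesis w1 : wf H1.
Hypothesis w2 : wf H2.
Hypothesis dis : forall x, x \in gV H1 -> x \in gV H2 -> False.
Hypothesis hV : gV H = gV H1 :|: gV H2.
Hypothesis hE : gE H = gE H1 :|: gE H2.

Lemma wfU : wf H.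
Proof using w1 w2 dis hV hE.
move=> e; rewrite hE hV !inE => /orP [] /[dup] ein.
  by move/w1 => [-> ->].
by move/w2 => [-> ->]; rewrite !orbT.
Qed.

Lemma edge_side e x y : e \in gE H -> joins e x y -> x \in gV H1 -> e \in gE H1 /\ y \in gV H1.
Proof using w1 w2 dis hV hE.
rewrite hE inE => /orP [] ein j xV.
  by split=> //; have [] := wf_joins w1 ein j.
by exfalso; have [xV2 _] := wf_joins w2 ein j; apply: (dis xV xV2).
Qed.

Lemma acycU X1 X2 : acyclic ends (del H1 X1) -> acyclic ends (del H2 X2) ->
  acyclic ends (del H (X1 :|: X2)).
Proof using w1 w2 dis hV hE.
move=> a1 a2 cy.
have cl : forall e x y, e \in gE (del H (X1 :|: X2)) -> joins e x y -> x \in gV H1 -> y \in gV H1.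
  move=> e x y; rewrite inE => /andP[eH _] j xV.
  by have [] := edge_side eH j xV.
case: (cyc_closed cl cy) => cy'.
  apply: a1; apply: (cycle_mono _ _ cy').
    apply/subsetP => v; rewrite !inE => /andP[/andP[_ vX] ->].
    by move: vX; rewrite negb_or => /andP[->].
  apply/subsetP => e; rewrite !inE => /andP[/andP[eH /andP[h1 h2]] /andP[g1 g2]].
  have j : joins e (ends e).1 (ends e).2 by rewrite /Defs.joins -surjective_pairing eqxx.
  have [e1 _] := edge_side eH j g1.
  by rewrite e1 /=; move: h1 h2; rewrite !negb_or => /andP[-> _] /andP[-> _].
apply: a2; apply: (cycle_mono _ _ cy').
  apply/subsetP => v; rewrite !inE => /andP[/andP[vH vX] vn].
  move: vH; rewrite hV inE (negbTE vn) /= => ->.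
  by move: vX; rewrite negb_or => /andP[_ ->].
apply/subsetP => e; rewrite !inE => /andP[/andP[eH /andP[h1 h2]] /andP[g1 g2]].
have e2 : e \in gE H2.
  move: eH; rewrite hE inE => /orP [] // /w1 [k1 _]; by move: g1; rewrite k1.
by rewrite e2 /=; move: h1 h2; rewrite !negb_or => /andP[_ ->] /andP[_ ->].
Qed.

Lemma compU v : v \in gV H1 -> comp H v = comp H1 v.
Proof using w1 w2 dis hV hE.
move=> vV; apply/setP => u; rewrite !compP; apply/andP/andP => [[uV cu]|[uV cu]].
  have P : forall u, connect (adj H) v u -> u \in gV H1 /\ connect (adj H1) v u.
    apply: connect_inv; first by split=> //; apply: connect0.
    move=> a b _ [aV ca] /adjP [e ein j]; have [e1 bV] := edge_side ein j aV.
    split=> //; apply: connect_trans ca (connect1 _); apply/adjP; by exists e.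
  by have [] := P u cu; split.
split; first by rewrite hV inE uV.
apply: (connect_sub _ cu) => a b /adjP [e ein j]; apply: connect1; apply/adjP; exists e => //.
by rewrite hE inE ein.
Qed.


Lemma inducedU (K : {set T}) : K \subset gV H1 -> induced H K = induced H1 K.
Proof using w1 w2 dis hV hE.
move=> /subsetP sK; rewrite /Defs.induced; congr MG; apply/setP => x; rewrite !inE.
  rewrite hV inE; case xK: (x \in K); rewrite ?andbF // !andbT. by rewrite sK.
rewrite hE inE; case: (boolP (x \in gE H1)) => //= x2.
case eK: ((ends x).1 \in K) => //=; last by rewrite andbF.
apply/negP => /andP[xe _].
by have [k1 _] := w2 xe; apply: (dis (sK _ eK) k1).
Qed.

End S.


Lemma cert_fvs (T E : finType) (ends : E -> T * T) (G' H : mgraph T E) (C : {set T}) :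
  certificate ends G' C H -> #|C| <= fvs ends G'.
Proof.
case=> [[sv se w] _ mn]; rewrite /fvs.
apply: (big_ind (fun m => #|C| <= m)); first exact: max_card.
  by move=> a b ha hb; rewrite leq_min ha hb.
move=> X; rewrite /is_fvsb; case: ClassicalEpsilon.excluded_middle_informative => // h _.
apply: leq_trans (mn _ (fvs_restrict w sv se h)) _.
by apply: subset_leq_card; apply: subsetIl.
Qed.

Unset Implicit Arguments.
Theorem lemma12 (T E : finType) (ends : E -> T * T) (G : mgraph T E) (z : nat)
    (C1 F1 C2 F2 : {set T}) :
  wf ends G ->
  z_antler ends G z C1 F1 ->
  z_antler ends (del ends G (C1 :|: F1)) z C2 F2 ->
  z_antler ends G z (C1 :|: C2) (F1 :|: F2).
Proof.
move=> wfG [[[hC1 hF1 hd1 acyc1 hcomp1] _] [H1 [[[sV1 sE1 wf1] [fC1 fa1] min1] ord1]]]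
            [[[hC2 hF2 hd2 acyc2 hcomp2] _] [H2 [[[sV2 sE2 wf2] [fC2 fa2] min2] ord2]]].
set G2 := del ends G (C1 :|: F1) in hC2 hF2 hcomp2 acyc2 sV1 sE2 sV2 ord2 |- *.
have G2P : forall x, x \in gV G2 -> [/\ x \in gV G, x \notin C1 & x \notin F1].
  by move=> x; rewrite /G2 !inE negb_or => /andP[-> /andP[-> ->]].
have V1P : forall x, x \in gV H1 -> x \in gV G /\ x \in C1 :|: F1.
  by move=> x /(subsetP sV1); rewrite inE => /andP[-> ->].
have V2P : forall x, x \in gV H2 -> x \in gV G2 /\ x \in C2 :|: F2.
  by move=> x /(subsetP sV2); rewrite inE => /andP[-> ->].
have dis : forall x, x \in gV H1 -> x \in gV H2 -> False.
  move=> x /V1P [_ h1] /V2P [/G2P [_ c f] _]; move: h1; by rewrite inE (negbTE c) (negbTE f).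
set H := MG (gV H1 :|: gV H2) (gE H1 :|: gE H2).
have hV : gV H = gV H1 :|: gV H2 by [].
have hE : gE H = gE H1 :|: gE H2 by [].
have dis' : forall x, x \in gV H2 -> x \in gV H1 -> False by move=> x a b; apply: (dis x b a).
have hV' : gV H = gV H2 :|: gV H1 by rewrite setUC.
have hE' : gE H = gE H2 :|: gE H1 by rewrite setUC.
have wH : wf ends H := wfU wf1 wf2 dis hV hE.
have cert : certificate ends (induced ends G ((C1 :|: C2) :|: (F1 :|: F2))) (C1 :|: C2) H.
  split.
  - split=> //.
    + apply/subsetP => x; rewrite hV inE => /orP [/V1P [xV xi]|/V2P [/G2P [xV _ _] xi]];
        rewrite inE xV /=; move: xi; rewrite !inE => /orP [] ->; rewrite ?orbT //.
    + apply/subsetP => e; rewrite hE inE => /orP [] /[dup] ein.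
        move/(subsetP sE1); rewrite !inE => /andP[-> /andP[]].
        by move=> /orP [] -> /orP [] ->; rewrite ?orbT.
      move/(subsetP sE2); rewrite !inE => /andP[/andP[-> _] /andP[]].
      by move=> /orP [] -> /orP [] ->; rewrite ?orbT.
  - split; first by rewrite hV; apply: setUSS.
    exact: (acycU wf1 wf2 dis hV hE fa1 fa2).
  - move=> X hX.
    have s1V : gV H1 \subset gV H by rewrite hV subsetUl.
    have s1E : gE H1 \subset gE H by rewrite hE subsetUl.
    have s2V : gV H2 \subset gV H by rewrite hV subsetUr.
    have s2E : gE H2 \subset gE H by rewrite hE subsetUr.
    have m1 := min1 _ (fvs_restrict wf1 s1V s1E hX).
    have m2 := min2 _ (fvs_restrict wf2 s2V s2E hX).
    rewrite -(cardsID (gV H1) X).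
    apply: leq_trans (leq_add m1 (leq_trans m2 (subset_leq_card _))).
      by rewrite cardsU leq_subr.
    apply/subsetP => x; rewrite !inE => /andP[xX xV]; rewrite xX andbT.
    by apply/negP => /dis /(_ xV).
split; [split; [split|] | exists H; split => //].
- by apply/subsetP => x; rewrite inE => /orP [/(subsetP hC1)|/(subsetP hC2) /G2P []].
- by apply/subsetP => x; rewrite inE => /orP [/(subsetP hF1)|/(subsetP hF2) /G2P []].
- apply/disjP => x; rewrite !inE => /orP [xC|xC] /orP [xF|xF].
  + by move: (disjointFr hd1 xC); rewrite xF.
  + by have [_ /negP] := G2P _ (subsetP hF2 x xF).
  + by have [_ _ /negP] := G2P _ (subsetP hC2 x xC).
  + by move: (disjointFr hd2 xC); rewrite xF.
- by apply: (acycA wfG hF1 hcomp1 acyc1 hF2 hcomp2 acyc2).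
- by move=> K hK; apply: (compB wfG hF1 hcomp1 acyc1 hF2 hcomp2 acyc2 hK).
- exact: (cert_fvs cert).
- move=> K [v vV ->]; move: vV; rewrite hV inE => /orP [vV|vV].
  + rewrite (compU wf1 wf2 dis hV hE vV) (inducedU wf1 wf2 dis hV hE (comp_sub _ _ _)).
    have -> : (C1 :|: C2) :&: Defs.comp ends H1 v = C1 :&: Defs.comp ends H1 v.
      apply/setP => x; rewrite !in_setI in_setU; case xK: (x \in Defs.comp ends H1 v); rewrite ?andbF //.
      rewrite !andbT; case: (boolP (x \in C2)) => xC; rewrite ?orbT ?orbF //.
      exfalso; apply: (dis x (subsetP (comp_sub _ _ _) _ xK) (subsetP fC2 _ xC)).
    by apply: ord1; exists v.
  + rewrite (compU wf2 wf1 dis' hV' hE' vV) (inducedU wf2 wf1 dis' hV' hE' (comp_sub _ _ _)).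
    have -> : (C1 :|: C2) :&: Defs.comp ends H2 v = C2 :&: Defs.comp ends H2 v.
      apply/setP => x; rewrite !in_setI in_setU; case xK: (x \in Defs.comp ends H2 v); rewrite ?andbF //.
      rewrite !andbT; case: (boolP (x \in C1)) => xC; rewrite ?orbF //=.
      exfalso; apply: (dis x (subsetP fC1 _ xC) (subsetP (comp_sub _ _ _) _ xK)).
    by apply: ord2; exists v.
Qed.
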